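(* Let $A$ be a general event structure and let $\mathit{er}(A)=(P,\le_P,\mathrm{Con}_P,\equiv_P)$ be as defined in the context. Then the set of configurations of $(P,\le_P,\mathrm{Con}_P)$, ordered by inclusion, is order-isomorphic to the order of extremal realisations of $\mathcal{C}^\infty(A)$. Explicitly: an extremal realisation $\rho$ corresponds (up to isomorphism of realisations) to the configuration $\{p\in P \mid p\preceq\rho\}$ of $P$; conversely a configuration $x$ of $P$ corresponds to the extremal realisation with carrier $(x,\le_P\restriction x)$ and function $\max_A : x\to A$.
   Context: A general event structure is $(E,\mathrm{Con},\vdash)$ where $E$ is a set, $\mathrm{Con}$ is a nonempty family of finite subsets of $E$ closed under subsets, and $\vdash\subseteq \mathrm{Con}\times E$ satisfies: $Y\in\mathrm{Con}$, $X\subseteq Y$, $X\vdash e$ imply $Y\vdash e$. A configuration is a subset $x\subseteq E$ which is consistent (every finite subset lies in $\mathrm{Con}$) and secured (for every $e\in x$ there are $e_1,\dots,e_n\in x$ with $e_n=e$ and $\{e_1,\dots,e_{i-1}\}\vdash e_i$ for all $i\le n$). $\mathcal{C}^\infty(A)$ denotes the set of configurations of $A$. Causal realisations: Let $\mathcal A$ be a family of sets with underlying set $A=\bigcup\mathcal A$. A (causal) realisation of $\mathcal A$ is a partial order $(E,\le)$ (its carrier) in which $\{e'\mid e'\le e\}$ is finite for all $e$, with a function $\rho:E\to A$ such that $\rho x\in\mathcal A$ for every down-closed $x\subseteq E$. A map of realisations from $(E,\le),\rho$ to $(E',\le'),\rho'$ is a partial surjective function $f:E\rightharpoonup E'$ sending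 down-closed subsets to down-closed subsets with $\rho(e)=\rho'(f(e))$ whenever $f(e)$ is defined; write $\rho\succeq\rho'$ (equivalently $\rho'\preceq\rho$) if such a map exists. A map is total if $f$ is a total function. A realisation $\rho$ is extremal if every total map of realisations out of $\rho$ is an isomorphism of realisations. The order of extremal realisations has as elements isomorphism classes of extremal realisations, ordered by $\preceq$ between representatives. A realisation has a top element if its carrier has an element above all others. $\mathit{er}(A)$: $P$ consists of one chosen representative from each isomorphism class of extremal realisations of $\mathcal{C}^\infty(A)$ having a top element; for $p\in P$, $\max_A(p)\in A$ is the image under the realisation's function of its top element. $p\le_P p'$ iff $p\preceq p'$. A finite $X\subseteq P$ is in $\mathrm{Con}_P$ iff $\max_A[X]\in\mathcal{C}^\infty(A)$, where $[X]$ is the $\le_P$-down-closure of $X$. $p_1\equiv_P p_2$ iff $\max_A(p_1)=\max_A(p_2)$. A configuration of $(P,\le_P,\mathrm{Con}_P)$ is a down-closed subset all of whose finite subsets are in $\mathrm{Con}_P$. *)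

(* Defs.v *)
From Stdlib Require Import List.
Import ListNotations.
Set Implicit Arguments.

Definition subset {T : Type} (X Y : T -> Prop) : Prop := forall a, X a -> Y a.
Definition finite {T : Type} (X : T -> Prop) : Prop :=
  exists l : list T, forall a, X a -> In a l.
Definition image {T U : Type} (f : T -> U) (X : T -> Prop) : U -> Prop :=
  fun b => exists a, X a /\ f a = b.

Record GES := {
  ev : Type;
  Con : (ev -> Prop) -> Prop;
  ent : (ev -> Prop) -> ev -> Prop;
  Con_fin : forall X, Con X -> finite X;
  Con_ne : exists X, Con X;
  Con_sub : forall X Y, Con Y -> subset X Y -> Con X;
  ent_Con : forall X e, ent X e -> Con X;
  ent_mono : forall X Y e, Con Y -> subset X Y -> ent X e -> ent Y e
}.

(* securing (e_n :: ... :: e_1 :: nil) : each e_i is enabled by {e_1..e_{i-1}} *)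
Fixpoint securing (A : GES) (l : list (ev A)) : Prop :=
  match l with
  | [] => True
  | e :: l' => securing A l' /\ ent A (fun a => In a l') e
  end.

Definition consistent (A : GES) (x : ev A -> Prop) : Prop :=
  forall X, finite X -> subset X x -> Con A X.
Definition secured (A : GES) (x : ev A -> Prop) : Prop :=
  forall e, x e -> exists l, securing A (e :: l) /\ forall a, In a l -> x a.
Definition config (A : GES) (x : ev A -> Prop) : Prop :=
  consistent A x /\ secured A x.

Definition down_closed {E : Type} (le : E -> E -> Prop) (x : E -> Prop) : Prop :=
  forall e e', x e -> le e' e -> x e'.

Definition is_real (A : GES) {E : Type} (le : E -> E -> Prop) (lab : E -> ev A) : Prop :=
  (forall e, le e e) /\
  (forall e e', le e e' -> le e' e -> e = e') /\
  (forall e1 e2 e3, le e1 e2 -> le e2 e3 -> le e1 e3) /\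
  (forall e, finite (fun e' => le e' e)) /\
  (forall x, down_closed le x -> config A (image lab x)).

Record realisation (A : GES) := {
  carrier : Type;
  rle : carrier -> carrier -> Prop;
  rlab : carrier -> ev A;
  rreal : is_real A rle rlab
}.

Definition is_map (A : GES) {E E' : Type} (le : E -> E -> Prop) (lab : E -> ev A)
  (le' : E' -> E' -> Prop) (lab' : E' -> ev A) (f : E -> option E') : Prop :=
  (forall e', exists e, f e = Some e') /\
  (forall x, down_closed le x -> down_closed le' (fun e' => exists e, x e /\ f e = Some e')) /\
  (forall e e', f e = Some e' -> lab e = lab' e').

(* rho >= rho' : there is a map from rho to rho' *)
Definition real_succ (A : GES) {E E' : Type} (le : E -> E -> Prop) (lab : E -> ev A)
  (le' : E' -> E' -> Prop) (lab' : E' -> ev A) : Prop :=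
  exists f, is_map A le lab le' lab' f.

Definition real_preceq (A : GES) {E E' : Type} (le : E -> E -> Prop) (lab : E -> ev A)
  (le' : E' -> E' -> Prop) (lab' : E' -> ev A) : Prop :=
  real_succ A le' lab' le lab.

Definition iso_map (A : GES) {E E' : Type} (le : E -> E -> Prop) (lab : E -> ev A)
  (le' : E' -> E' -> Prop) (lab' : E' -> ev A) (f : E -> E') : Prop :=
  is_map A le lab le' lab' (fun e => Some (f e)) /\
  exists g : E' -> E,
    (forall e, g (f e) = e) /\ (forall e', f (g e') = e') /\
    is_map A le' lab' le lab (fun e' => Some (g e')).

Definition real_iso (A : GES) {E E' : Type} (le : E -> E -> Prop) (lab : E -> ev A)
  (le' : E' -> E' -> Prop) (lab' : E' -> ev A) : Prop :=
  exists f, iso_map A le lab le' lab' f.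

Definition extremal (A : GES) {E : Type} (le : E -> E -> Prop) (lab : E -> ev A) : Prop :=
  forall (E' : Type) (le' : E' -> E' -> Prop) (lab' : E' -> ev A),
    is_real A le' lab' ->
    forall f : E -> E', is_map A le lab le' lab' (fun e => Some (f e)) ->
      iso_map A le lab le' lab' f.

Definition has_top {E : Type} (le : E -> E -> Prop) : Prop :=
  exists t, forall e, le e t.

(* R i is the chosen representative p, top i its top element *)
Definition leP (A : GES) {I : Type} (R : I -> realisation A) (p q : I) : Prop :=
  real_preceq A (@rle A (R p)) (@rlab A (R p)) (@rle A (R q)) (@rlab A (R q)).

Definition maxA (A : GES) {I : Type} (R : I -> realisation A)
  (top : forall i, carrier (R i)) (p : I) : ev A :=
  rlab (R p) (top p).

Definition downP (A : GES) {I : Type} (R : I -> realisation A) (X : I -> Prop) : I -> Prop :=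
  fun p => exists q, X q /\ leP R p q.

Definition ConP (A : GES) {I : Type} (R : I -> realisation A)
  (top : forall i, carrier (R i)) (X : I -> Prop) : Prop :=
  finite X /\ config A (image (maxA R top) (downP R X)).

Definition configP (A : GES) {I : Type} (R : I -> realisation A)
  (top : forall i, carrier (R i)) (x : I -> Prop) : Prop :=
  down_closed (leP R) x /\
  (forall X, finite X -> subset X x -> ConP R top X).

Definition Psi (A : GES) {I : Type} (R : I -> realisation A)
  {E : Type} (le : E -> E -> Prop) (lab : E -> ev A) : I -> Prop :=
  fun p => real_preceq A (@rle A (R p)) (@rlab A (R p)) le lab.

Definition PhiLe (A : GES) {I : Type} (R : I -> realisation A) (x : I -> Prop)
  : {p : I | x p} -> {p : I | x p} -> Prop :=
  fun a b => leP R (proj1_sig a) (proj1_sig b).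

Definition PhiLab (A : GES) {I : Type} (R : I -> realisation A)
  (top : forall i, carrier (R i)) (x : I -> Prop) : {p : I | x p} -> ev A :=
  fun a => maxA R top (proj1_sig a).

(* Main.v *)
Require Import Defs.
From Stdlib Require Import List Classical ClassicalEpsilon FunctionalExtensionality ProofIrrelevance Lia.
From Stdlib Require FinFun.
Import ListNotations.

Lemma sig_eq {T : Type} (P : T -> Prop) (a b : sig P) : proj1_sig a = proj1_sig b -> a = b.
Proof. destruct a as [a ha], b as [b hb]; simpl; intros ->; f_equal; apply proof_irrelevance. Qed.

Definition sub_le {E : Type} (le : E -> E -> Prop) (C : E -> Prop) : sig C -> sig C -> Prop :=
  fun a b => le (proj1_sig a) (proj1_sig b).
Definition sub_lab {A : GES} {E : Type} (lab : E -> ev A) (C : E -> Prop) : sig C -> ev A :=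
  fun a => lab (proj1_sig a).

Section Gen.
Context (A : GES).

Lemma config_ext (X Y : ev A -> Prop) : (forall a, X a <-> Y a) -> config A X -> config A Y.
Proof.
  intros H [Hc Hs]; split.
  - intros F HF HFY. apply Hc; auto. intros a Ha; apply H; auto.
  - intros e He. destruct (Hs e) as [l [Hl1 Hl2]]; [apply H; auto|].
    exists l; split; auto. intros a Ha; apply H; auto.
Qed.

Lemma consistent_sub (X Y : ev A -> Prop) : subset X Y -> config A Y -> consistent A X.
Proof. intros H [Hc _] F HF HFX. apply Hc; auto. intros a Ha; auto. Qed.

Section R.
Context {E : Type} (le : E -> E -> Prop) (lab : E -> ev A) (Hr : is_real A le lab).
Lemma rrefl : forall e, le e e. Proof. apply Hr. Qed.
Lemma rantisym : forall e e', le e e' -> le e' e -> e = e'. Proof. apply Hr. Qed.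
Lemma rtrans : forall e1 e2 e3, le e1 e2 -> le e2 e3 -> le e1 e3. Proof. apply Hr. Qed.
Lemma rfin : forall e, finite (fun e' => le e' e). Proof. apply Hr. Qed.
Lemma rconf : forall x, down_closed le x -> config A (image lab x). Proof. apply Hr. Qed.
Lemma rdown e : down_closed le (fun s => le s e).
Proof. intros a b Ha Hb. eapply rtrans; eauto. Qed.
Lemma rall : config A (image lab (fun _ => True)).
Proof. apply rconf. intros a b _ _; auto. Qed.
Lemma top_unique t t' : (forall e, le e t) -> (forall e, le e t') -> t = t'.
Proof. intros H1 H2; apply rantisym; auto. Qed.
End R.

Section M.
Context {E E' : Type} (le : E -> E -> Prop) (lab : E -> ev A)
  (le' : E' -> E' -> Prop) (lab' : E' -> ev A) (f : E -> option E').
Hypothesis Hf : is_map A le lab le' lab' f.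
Lemma msurj : forall e', exists e, f e = Some e'. Proof. apply Hf. Qed.
Lemma mdown : forall x, down_closed le x -> down_closed le' (fun e' => exists e, x e /\ f e = Some e').
Proof. apply Hf. Qed.
Lemma mlab : forall e e', f e = Some e' -> lab e = lab' e'. Proof. apply Hf. Qed.
End M.

Lemma ismap_comp {E1 E2 E3 : Type} le1 lab1 le2 lab2 le3 lab3
  (f : E1 -> option E2) (g : E2 -> option E3) :
  is_map A le1 lab1 le2 lab2 f -> is_map A le2 lab2 le3 lab3 g ->
  is_map A le1 lab1 le3 lab3 (fun e => match f e with Some e2 => g e2 | None => None end).
Proof.
  intros Hf Hg; split; [|split].
  - intros e3. destruct (msurj _ _ _ _ _ Hg e3) as [e2 H2].
    destruct (msurj _ _ _ _ _ Hf e2) as [e1 H1]. exists e1; rewrite H1; auto.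
  - intros x Hx e3 e3' [e1 [Hx1 H1]] Hle.
    destruct (f e1) as [e2|] eqn:Hfe; [|discriminate].
    assert (Hd2 := mdown _ _ _ _ _ Hf x Hx).
    assert (Hd3 := mdown _ _ _ _ _ Hg _ Hd2).
    destruct (Hd3 e3 e3') as [e2' [[e1' [Hx' H1']] H2']]; auto.
    + exists e2; split; auto. exists e1; auto.
    + exists e1'; split; auto. rewrite H1'; auto.
  - intros e e3 H. destruct (f e) as [e2|] eqn:Hfe; [|discriminate].
    rewrite (mlab _ _ _ _ _ Hf _ _ Hfe). eapply mlab; eauto.
Qed.

Lemma ismap_id {E : Type} (le : E -> E -> Prop) (lab : E -> ev A) :
  is_map A le lab le lab (fun e => Some e).
Proof.
  split; [|split].
  - intros e; exists e; auto.
  - intros x Hx e e' [a [Ha Hea]] Hle. injection Hea; intros ->. exists e'; split; auto.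
    eapply Hx; eauto.
  - intros e e' H; injection H; intros ->; auto.
Qed.

Lemma ismap_ext {E E' : Type} le lab le' lab' (f g : E -> option E') :
  (forall e, f e = g e) -> is_map A le lab le' lab' f -> is_map A le lab le' lab' g.
Proof. intros H Hf. replace g with f; auto. extensionality e; auto. Qed.

Lemma iso_inv {E E' : Type} le lab le' lab' (f : E -> E') :
  iso_map A le lab le' lab' f ->
  exists g, iso_map A le' lab' le lab g /\ (forall e, g (f e) = e) /\ (forall e', f (g e') = e').
Proof.
  intros [Hf [g [H1 [H2 Hg]]]]. exists g; split; auto.
  split; auto. exists f; auto.
Qed.

Lemma iso_comp {E1 E2 E3 : Type} le1 lab1 le2 lab2 le3 lab3 (f : E1 -> E2) (g : E2 -> E3) :
  iso_map A le1 lab1 le2 lab2 f -> iso_map A le2 lab2 le3 lab3 g ->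
  iso_map A le1 lab1 le3 lab3 (fun e => g (f e)).
Proof.
  intros [Hf [f' [F1 [F2 Hf']]]] [Hg [g' [G1 [G2 Hg']]]].
  split.
  - exact (ismap_comp _ _ _ _ _ _ _ _ Hf Hg).
  - exists (fun e => f' (g' e)). split; [|split].
    + intros e. rewrite ?G1, ?F1, ?F2, ?G2; auto.
    + intros e. rewrite ?G1, ?F1, ?F2, ?G2; auto.
    + exact (ismap_comp _ _ _ _ _ _ _ _ Hg' Hf').
Qed.

Lemma riso_sym {E E' : Type} le lab le' lab' :
  @real_iso A E E' le lab le' lab' -> real_iso A le' lab' le lab.
Proof. intros [f Hf]. destruct (iso_inv _ _ _ _ _ Hf) as [g [Hg _]]. exists g; auto. Qed.

Lemma riso_trans {E1 E2 E3 : Type} le1 lab1 le2 lab2 le3 lab3 :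
  @real_iso A E1 E2 le1 lab1 le2 lab2 -> @real_iso A E2 E3 le2 lab2 le3 lab3 ->
  real_iso A le1 lab1 le3 lab3.
Proof. intros [f Hf] [g Hg]. exists (fun e => g (f e)). eapply iso_comp; eauto. Qed.

Lemma iso_injective {E E' : Type} le lab le' lab' (f : E -> E') :
  iso_map A le lab le' lab' f -> forall a b, f a = f b -> a = b.
Proof. intros [_ [g [H1 _]]] a b H. transitivity (g (f a)); [symmetry; apply H1|]. rewrite H; apply H1. Qed.

Lemma iso_mono {E E' : Type} le lab le' lab' (f : E -> E') :
  is_real A le' lab' -> iso_map A le lab le' lab' f -> forall a b, le a b -> le' (f a) (f b).
Proof.
  intros Hr' [_ [g [H1 [H2 Hg]]]] a b Hab.
  assert (Hd := mdown _ _ _ _ _ Hg _ (rdown _ _ Hr' (f b))).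
  destruct (Hd b a) as [y [Hy Hya]]; auto.
  - exists (f b); split; [apply (rrefl _ _ Hr')|rewrite H1; auto].
  - injection Hya; intros <-. rewrite H2; auto.
Qed.

Lemma iso_top {E E' : Type} le lab le' lab' (f : E -> E') :
  is_real A le' lab' -> iso_map A le lab le' lab' f -> forall t, (forall e, le e t) ->
  forall e', le' e' (f t).
Proof.
  intros Hr' Hi t Ht e'. destruct Hi as [Hf [g [H1 [H2 Hg]]]].
  rewrite <- (H2 e'). apply (iso_mono le lab le' lab' f Hr'); auto. split; auto. exists g; auto.
Qed.

Lemma finite_sig {E : Type} (C P : E -> Prop) :
  finite P -> finite (fun b : sig C => P (proj1_sig b)).
Proof.
  intros [l Hl].
  exists (flat_map (fun a => match excluded_middle_informative (C a) with
                             | left h => [exist C a h] | right _ => [] end) l).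
  intros [a h] Ha. simpl in Ha. apply in_flat_map. exists a; split; auto.
  destruct (excluded_middle_informative (C a)) as [h'|n]; [|contradiction].
  left. apply sig_eq; auto.
Qed.

Lemma sub_real {E : Type} (le : E -> E -> Prop) (lab : E -> ev A) (C : E -> Prop) :
  is_real A le lab -> down_closed le C -> is_real A (sub_le le C) (sub_lab lab C).
Proof.
  intros Hr HC. unfold sub_le, sub_lab. split; [|split; [|split; [|split]]].
  - intros e; apply (rrefl _ _ Hr).
  - intros a b H1 H2. apply sig_eq. apply (rantisym _ _ Hr); auto.
  - intros a b c H1 H2. eapply (rtrans _ _ Hr); eauto.
  - intros e. apply (finite_sig C (fun e' => le e' (proj1_sig e))). apply (rfin _ _ Hr).
  - intros x Hx. apply config_ext with (image lab (fun s => exists h, x (exist C s h))).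
    + intros a; split.
      * intros [s [[h Hs] Hl]]. exists (exist C s h); auto.
      * intros [[s h] [Hs Hl]]. exists s; split; eauto.
    + apply (rconf _ _ Hr). intros s s' [h Hs] Hle.
      assert (h' : C s') by (eapply HC; eauto).
      exists h'. apply (Hx _ _ Hs). simpl; auto.
Qed.

Definition restr {E : Type} (C : E -> Prop) (e : E) : option (sig C) :=
  match excluded_middle_informative (C e) with left h => Some (exist C e h) | right _ => None end.

Lemma restr_in {E : Type} (C : E -> Prop) (b : sig C) : restr C (proj1_sig b) = Some b.
Proof.
  unfold restr. destruct (excluded_middle_informative (C (proj1_sig b))) as [h|n].
  - f_equal; apply sig_eq; auto.
  - destruct b; contradiction.
Qed.

Lemma restr_some {E : Type} (C : E -> Prop) e b : restr C e = Some b -> proj1_sig b = e.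
Proof.
  unfold restr. destruct (excluded_middle_informative (C e)); intros H; [|discriminate].
  injection H; intros <-; auto.
Qed.

Lemma restr_map {E : Type} (le : E -> E -> Prop) (lab : E -> ev A) (C : E -> Prop) :
  down_closed le C -> is_map A le lab (sub_le le C) (sub_lab lab C) (restr C).
Proof.
  intros HC. split; [|split].
  - intros b. exists (proj1_sig b). apply restr_in.
  - intros x Hx b b' [e [He Hr]] Hle. exists (proj1_sig b'). split; [|apply restr_in].
    apply restr_some in Hr. subst e. eapply Hx; eauto.
  - intros e b H. apply restr_some in H. subst e. reflexivity.
Qed.

Lemma map_restrict_dom {E E' : Type} le lab le' lab' (f : E -> option E') (C : E -> Prop) :
  is_map A le lab le' lab' f -> down_closed le C ->
  (forall y, exists e, C e /\ f e = Some y) ->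
  is_map A (sub_le le C) (sub_lab lab C) le' lab' (fun b => f (proj1_sig b)).
Proof.
  intros Hf HC Hs. split; [|split].
  - intros y. destruct (Hs y) as [e [h He]]. exists (exist C e h); auto.
  - intros x Hx y y' [b [Hb Hby]] Hle.
    assert (Hd := mdown _ _ _ _ _ Hf (fun s => exists h, x (exist C s h))).
    destruct (Hd) with y y' as [s [[h Hs'] Hsy]]; auto.
    + intros s s' [h Hs1] Hle'. assert (h' : C s') by (eapply HC; eauto).
      exists h'. apply (Hx _ _ Hs1). simpl; auto.
    + exists (proj1_sig b). split; auto. exists (proj2_sig b). destruct b; auto.
    + exists (exist C s h); auto.
  - intros b y H. apply (mlab _ _ _ _ _ Hf _ _ H).
Qed.

Lemma sub_equiv_iso {E : Type} (le : E -> E -> Prop) (lab : E -> ev A) (C1 C2 : E -> Prop)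
  (H : forall e, C1 e <-> C2 e) :
  real_iso A (sub_le le C1) (sub_lab lab C1) (sub_le le C2) (sub_lab lab C2).
Proof.
  exists (fun b => exist C2 (proj1_sig b) (proj1 (H _) (proj2_sig b))).
  split.
  - split; [|split].
    + intros b. exists (exist C1 (proj1_sig b) (proj2 (H _) (proj2_sig b))). f_equal; apply sig_eq; auto.
    + intros x Hx b b' [a [Ha Hab]] Hle. injection Hab; intros <-.
      exists (exist C1 (proj1_sig b') (proj2 (H _) (proj2_sig b'))). split.
      * eapply Hx; eauto.
      * f_equal; apply sig_eq; auto.
    + intros b b' Hb. injection Hb; intros <-; reflexivity.
  - exists (fun b => exist C1 (proj1_sig b) (proj2 (H _) (proj2_sig b))).
    split; [|split].
    + intros b; apply sig_eq; auto.
    + intros b; apply sig_eq; auto.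
    + split; [|split].
      * intros b. exists (exist C2 (proj1_sig b) (proj1 (H _) (proj2_sig b))). f_equal; apply sig_eq; auto.
      * intros x Hx b b' [a [Ha Hab]] Hle. injection Hab; intros <-.
        exists (exist C2 (proj1_sig b') (proj1 (H _) (proj2_sig b'))). split.
        -- eapply Hx; eauto.
        -- f_equal; apply sig_eq; auto.
      * intros b b' Hb. injection Hb; intros <-; reflexivity.
Qed.

End Gen.

Lemma pigeon {T : Type} (l : list T) (Hl : forall a, In a l) (f : T -> T)
  (Hinj : forall a b, f a = f b -> a = b) (y : T) (Hy : forall a, f a <> y) : False.
Proof.
  assert (dec : forall a b : T, {a = b} + {a <> b}).
  { intros a b; destruct (excluded_middle_informative (a = b)); auto. }
  set (n := nodup dec l).
  assert (Hn : NoDup n) by apply NoDup_nodup.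
  assert (Hin : forall a, In a n) by (intros a; apply nodup_In; auto).
  assert (H1 : NoDup (map f n)) by (apply FinFun.Injective_map_NoDup; auto; intros a b; apply Hinj).
  assert (H2 : incl (map f n) (remove dec y n)).
  { intros b Hb. apply in_map_iff in Hb. destruct Hb as [a [<- _]].
    apply in_in_remove; auto. }
  assert (H3 := NoDup_incl_length H1 H2). rewrite length_map in H3.
  assert (H4 := remove_length_lt dec n y (Hin y)). lia.
Qed.
Arguments rrefl {A E le lab} Hr e.
Arguments rantisym {A E le lab} Hr e e'.
Arguments rtrans {A E le lab} Hr e1 e2 e3.
Arguments rfin {A E le lab} Hr e.
Arguments rconf {A E le lab} Hr x.
Arguments rdown {A E le lab} Hr e.
Arguments rall {A E le lab} Hr.
Arguments top_unique {A E le lab} Hr t t'.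
Arguments msurj {A E E' le lab le' lab' f} Hf e'.
Arguments mdown {A E E' le lab le' lab' f} Hf x.
Arguments mlab {A E E' le lab le' lab' f} Hf e e'.


Section Glue.
Context (A : GES) {E E' : Type} (le : E -> E -> Prop) (lab : E -> ev A)
  (le' : E' -> E' -> Prop) (lab' : E' -> ev A) (f : E -> option E').
Hypotheses (Hr : is_real A le lab) (Hr' : is_real A le' lab') (Hf : is_map A le lab le' lab' f).

Definition Ex := {s : E | f s = None}.
Definition Z := (E' + Ex)%type.
Definition optdec (o : option E') : {y | o = Some y} + {o = None} :=
  match o with Some y => inleft (exist _ y eq_refl) | None => inright eq_refl end.
Definition hZ (s : E) : Z :=
  match optdec (f s) with inleft (exist _ y _) => inl y | inright H => inr (exist _ s H) end.

Lemma hZ_some s y : f s = Some y -> hZ s = inl y.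
Proof. unfold hZ; destruct (optdec (f s)) as [[y' H']|H']; congruence. Qed.
Lemma hZ_none s (H : f s = None) : hZ s = inr (exist _ s H).
Proof.
  unfold hZ; destruct (optdec (f s)) as [[y' H']|H']; [congruence|].
  f_equal; apply sig_eq; auto.
Qed.
Lemma hZ_inl s y : hZ s = inl y -> f s = Some y.
Proof. unfold hZ; destruct (optdec (f s)) as [[y' H']|H']; congruence. Qed.
Lemma hZ_inr s u : hZ s = inr u -> proj1_sig u = s.
Proof. unfold hZ; destruct (optdec (f s)) as [[y' H']|H']; intros H; inversion H; auto. Qed.
Lemma hZ_ex (u : Ex) : hZ (proj1_sig u) = inr u.
Proof. destruct u as [s H]; simpl. apply hZ_none. Qed.

Definition leZ (z1 z2 : Z) : Prop :=
  match z2 with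
  | inl y2 => match z1 with inl y1 => le' y1 y2 | inr _ => False end
  | inr u => exists s, le s (proj1_sig u) /\ hZ s = z1
  end.
Definition labZ (z : Z) : ev A := match z with inl y => lab' y | inr u => lab (proj1_sig u) end.

Lemma labZ_h s : labZ (hZ s) = lab s.
Proof.
  destruct (f s) as [y|] eqn:H.
  - rewrite (hZ_some _ _ H). simpl. symmetry; eapply mlab; eauto.
  - rewrite (hZ_none _ H). reflexivity.
Qed.

Lemma glue_real : is_real A leZ labZ.
Proof.
  split; [|split; [|split; [|split]]].
  - intros [y|u]; simpl.
    + apply (rrefl Hr').
    + exists (proj1_sig u); split; [apply (rrefl Hr)|apply hZ_ex].
  - intros [y1|u1] [y2|u2]; simpl; try tauto.
    + intros; f_equal; apply (rantisym Hr'); auto.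
    + intros [s1 [H1 H1']] [s2 [H2 H2']].
      apply hZ_inr in H1'; apply hZ_inr in H2'. subst.
      f_equal; apply sig_eq. apply (rantisym Hr); auto.
  - intros z1 z2 [y3|w].
    + destruct z2 as [y2|u2]; [|simpl; tauto]. destruct z1 as [y1|u1]; [|simpl; tauto].
      simpl. apply (rtrans Hr').
    + simpl. intros H12 [s2 [Hs2 Hh2]].
      destruct z2 as [y2|u2].
      * destruct z1 as [y1|u1]; [|simpl in H12; tauto]. simpl in H12.
        apply hZ_inl in Hh2.
        destruct (mdown Hf _ (rdown Hr s2) y2 y1) as [s1 [Hs1 Hf1]]; auto.
        { exists s2; split; auto. apply (rrefl Hr). }
        exists s1; split; [eapply (rtrans Hr); eauto|]. apply hZ_some; auto.
      * destruct H12 as [s1 [Hs1 Hh1]]. apply hZ_inr in Hh2. subst s2.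
        exists s1; split; auto. eapply (rtrans Hr); eauto.
  - intros [y|u].
    + destruct (rfin Hr' y) as [l Hl]. exists (map inl l).
      intros [y'|u']; simpl; [|tauto]. intros H. apply in_map. auto.
    + destruct (rfin Hr (proj1_sig u)) as [l Hl]. exists (map hZ l).
      intros z [s [Hs Hz]]. subst z. apply in_map; auto.
  - intros x Hx. split.
    + apply consistent_sub with (image lab (fun _ => True)); [|apply (rall Hr)].
      intros a [[y|u] [Hz Ha]]; subst a; simpl.
      * destruct (msurj Hf y) as [s Hs]. exists s; split; auto. eapply mlab; eauto.
      * exists (proj1_sig u); auto.
    + intros a [[y|u] [Hz Ha]]; subst a; simpl.
      * assert (Hc := rconf Hr' (fun y' => x (inl y'))).
        destruct Hc as [_ Hs].
        { intros y1 y2 H1 H2. apply (Hx _ (inl y2) H1). simpl; auto. }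
        destruct (Hs (lab' y)) as [l [Hl1 Hl2]]; [exists y; auto|].
        exists l; split; auto. intros b Hb. destruct (Hl2 b Hb) as [y' [Hy' Hb']].
        exists (inl y'); auto.
      * destruct (rconf Hr _ (rdown Hr (proj1_sig u))) as [_ Hs].
        destruct (Hs (lab (proj1_sig u))) as [l [Hl1 Hl2]].
        { exists (proj1_sig u); split; auto. apply (rrefl Hr). }
        exists l; split; auto. intros b Hb. destruct (Hl2 b Hb) as [s [Hs1 Hb']].
        exists (hZ s); split.
        -- apply (Hx _ _ Hz). simpl. exists s; auto.
        -- rewrite labZ_h; auto.
Qed.

Lemma glue_map : is_map A le lab leZ labZ (fun s => Some (hZ s)).
Proof.
  split; [|split].
  - intros [y|u].
    + destruct (msurj Hf y) as [s Hs]. exists s. f_equal; apply hZ_some; auto.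
    + exists (proj1_sig u). f_equal; apply hZ_ex.
  - intros x Hx z z' [s [Hs Hz]] Hle. injection Hz; clear Hz; intros Hz.
    destruct z as [y|u].
    + apply hZ_inl in Hz. destruct z' as [y'|u']; [|simpl in Hle; tauto]. simpl in Hle.
      destruct (mdown Hf _ Hx y y') as [s' [Hs' Hf']]; eauto.
      exists s'; split; auto. f_equal; apply hZ_some; auto.
    + apply hZ_inr in Hz. subst s. destruct Hle as [s' [Hs' Hz']].
      exists s'; split; [eapply Hx; eauto|]. rewrite Hz'; auto.
  - intros s z H. injection H; intros <-. symmetry; apply labZ_h.
Qed.

Definition inlset (T : E' -> Prop) (z : Z) : Prop := match z with inl y => T y | inr _ => False end.

Lemma glue_inl_down T : down_closed le' T -> down_closed leZ (inlset T).
Proof.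
  intros HT [y|u] [y'|u']; simpl; try tauto. intros; eapply HT; eauto.
Qed.

Lemma glue_extremal : extremal A le lab ->
  exists k : Z -> E, (forall s, k (hZ s) = s) /\ (forall z, hZ (k z) = z) /\
    is_map A leZ labZ le lab (fun z => Some (k z)).
Proof.
  intros Hx. destruct (Hx Z leZ labZ glue_real hZ glue_map) as [_ [k [H1 [H2 Hk]]]].
  exists k; auto.
Qed.

End Glue.


Lemma K2 (A : GES) {E E' : Type} (le : E -> E -> Prop) (lab : E -> ev A)
  (le' : E' -> E' -> Prop) (lab' : E' -> ev A)
  (Hr : is_real A le lab) (Hr' : is_real A le' lab') (Hx : extremal A le lab)
  (t : E) (Ht : forall e, le e t) (f : E -> option E') (Hf : is_map A le lab le' lab' f)
  (y0 : E') (H0 : f t = Some y0) :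
  exists f', (forall s, f s = Some (f' s)) /\ iso_map A le lab le' lab' f'.
Proof.
  destruct (glue_extremal A le lab le' lab' f Hr Hr' Hf Hx) as [k [K1 [K2 Hk]]].
  assert (Htot : forall s, exists y, f s = Some y).
  { intros s.
    assert (Hd := mdown Hk _ (glue_inl_down le le' f (fun _ => True) ltac:(intros ? ? ? ?; auto))).
    destruct (Hd t s) as [z [Hz Hzs]]; auto.
    - exists (inl y0); split; simpl; auto. f_equal. rewrite <- (hZ_some f t y0 H0). apply K1.
    - destruct z as [y|u]; simpl in Hz; [|tauto]. injection Hzs; intros <-.
      exists y. apply (hZ_inl f). apply K2. }
  set (f' := fun s => match f s with Some y => y | None => y0 end).
  assert (Hf' : forall s, f s = Some (f' s)).
  { intros s; unfold f'. destruct (Htot s) as [y Hy]; rewrite Hy; auto. }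
  exists f'; split; auto. apply Hx; auto. eapply ismap_ext; [|exact Hf]. auto.
Qed.

Lemma down_extremal (A : GES) {E : Type} (le : E -> E -> Prop) (lab : E -> ev A)
  (Hr : is_real A le lab) (Hx : extremal A le lab) (e : E) :
  extremal A (sub_le le (fun s => le s e)) (sub_lab lab (fun s => le s e)).
Proof.
  intros E' le' lab' Hr' g Hg.
  set (C := fun s => le s e).
  set (f := fun s => match excluded_middle_informative (C s) with
                     | left h => Some (g (exist C s h)) | right _ => None end).
  assert (Hfb : forall b : sig C, f (proj1_sig b) = Some (g b)).
  { intros b. unfold f. destruct (excluded_middle_informative (C (proj1_sig b))) as [h|n].
    - do 2 f_equal; apply sig_eq; auto.
    - destruct b; contradiction. }
  assert (Hfs : forall s y, f s = Some y -> exists h, g (exist C s h) = y).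
  { intros s y. unfold f. destruct (excluded_middle_informative (C s)) as [h|n]; intros H; [|discriminate].
    injection H; eauto. }
  assert (Hf : is_map A le lab le' lab' f).
  { split; [|split].
    - intros y. destruct (msurj Hg y) as [b Hb]. injection Hb; intros <-.
      exists (proj1_sig b); auto.
    - intros x Hx0 y y' [s [Hs Hsy]] Hle.
      destruct (Hfs _ _ Hsy) as [h Hh].
      destruct (mdown Hg (fun b : sig C => x (proj1_sig b))) with y y' as [b' [Hb' Hb'y]]; auto.
      + intros b1 b2 H1 H2. eapply Hx0; eauto.
      + exists (exist C s h); split; auto. rewrite Hh; auto.
      + exists (proj1_sig b'); split; auto. rewrite Hfb. auto.
    - intros s y H. destruct (Hfs _ _ H) as [h Hh]. subst y.
      assert (Hl := mlab Hg (exist C s h) _ eq_refl). exact Hl. }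
  destruct (glue_extremal A le lab le' lab' f Hr Hr' Hf Hx) as [k [K1 [K2 Hk]]].
  assert (HC : forall y, C (k (inl y))).
  { intros y. assert (H := hZ_inl f _ _ (K2 (inl y))).
    destruct (Hfs _ _ H) as [h _]; auto. }
  assert (Hginv : forall y, g (exist C (k (inl y)) (HC y)) = y).
  { intros y. assert (H := hZ_inl f _ _ (K2 (inl y))).
    assert (H' := Hfb (exist C (k (inl y)) (HC y))). simpl in H'.
    rewrite H' in H. injection H; auto. }
  assert (Hgb : forall b, exist C (k (inl (g b))) (HC (g b)) = b).
  { intros b. apply sig_eq; simpl.
    rewrite <- (hZ_some f _ _ (Hfb b)). apply K1. }
  split; auto.
  exists (fun y => exist C (k (inl y)) (HC y)). split; [|split]; auto.
  split; [|split].
  - intros b. exists (g b). rewrite Hgb; auto.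
  - intros T HT b b' [y [Hy Hyb]] Hle. injection Hyb; clear Hyb; intros Hyb.
    assert (Hd := mdown Hk _ (glue_inl_down le le' f T HT)).
    destruct (Hd (proj1_sig b) (proj1_sig b')) as [z [Hz Hzb]]; auto.
    + exists (inl y); split; auto. rewrite <- Hyb; auto.
    + destruct z as [y'|u]; simpl in Hz; [|tauto]. exists y'; split; auto.
      f_equal; apply sig_eq; simpl. injection Hzb; auto.
  - intros y b H. injection H; clear H; intros <-. unfold sub_lab; simpl.
    assert (Hl := mlab Hk (inl y) _ eq_refl). simpl in Hl. auto.
Qed.


Set Default Proof Using "All".

Section Main.
Context (A : GES) (I : Type) (R : I -> realisation A) (top : forall i, carrier (R i))
  (Htop : forall i e, rle (R i) e (top i))
  (Hext : forall i, extremal A (rle (R i)) (rlab (R i)))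
  (Hdistinct : forall i j, real_iso A (rle (R i)) (rlab (R i)) (rle (R j)) (rlab (R j)) -> i = j)
  (Hcover : forall (E : Type) (le : E -> E -> Prop) (lab : E -> ev A),
      is_real A le lab -> extremal A le lab -> has_top le ->
      exists i, real_iso A le lab (rle (R i)) (rlab (R i))).

Lemma leP_trans p q r : leP R p q -> leP R q r -> leP R p r.
Proof.
  intros [f Hf] [g Hg]. exists (fun e => match g e with Some e2 => f e2 | None => None end).
  eapply ismap_comp; eauto.
Qed.

Lemma leP_refl p : leP R p p.
Proof. exists (fun e => Some e). apply ismap_id. Qed.

Section Rho.
Context {E : Type} {le : E -> E -> Prop} {lab : E -> ev A}
  (Hr : is_real A le lab) (Hx : extremal A le lab).

Lemma down_real e : is_real A (sub_le le (fun s => le s e)) (sub_lab lab (fun s => le s e)).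
Proof. apply sub_real; auto. apply (rdown Hr). Qed.

Definition topd e : sig (fun s => le s e) := exist _ e (rrefl Hr e).

Lemma topd_top e : forall b, sub_le le (fun s => le s e) b (topd e).
Proof. intros [b h]; unfold sub_le; simpl; auto. Qed.

Lemma exists_q e : exists q, real_iso A (sub_le le (fun s => le s e)) (sub_lab lab (fun s => le s e))
  (rle (R q)) (rlab (R q)).
Proof.
  apply Hcover.
  - apply down_real.
  - apply down_extremal; auto.
  - exists (topd e). apply topd_top.
Qed.

Definition qOf e : I := proj1_sig (constructive_indefinite_description _ (exists_q e)).

Lemma qOf_iso e : real_iso A (sub_le le (fun s => le s e)) (sub_lab lab (fun s => le s e))
  (rle (R (qOf e))) (rlab (R (qOf e))).
Proof. unfold qOf. destruct (constructive_indefinite_description _ (exists_q e)); auto. Qed.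

Lemma iso_top_q e (f : _ -> carrier (R (qOf e))) :
  iso_map A (sub_le le (fun s => le s e)) (sub_lab lab (fun s => le s e))
    (rle (R (qOf e))) (rlab (R (qOf e))) f -> f (topd e) = top (qOf e).
Proof.
  intros Hf. apply (top_unique (rreal (R (qOf e)))); auto.
  apply (iso_top _ _ _ _ _ _ (rreal (R (qOf e))) Hf). apply topd_top.
Qed.

Lemma qOf_lab e : maxA R top (qOf e) = lab e.
Proof.
  destruct (qOf_iso e) as [f Hf]. unfold maxA. rewrite <- (iso_top_q e f Hf).
  destruct Hf as [Hf _]. symmetry. apply (mlab Hf (topd e) _ eq_refl).
Qed.

Lemma qOf_map e : exists g, is_map A le lab (rle (R (qOf e))) (rlab (R (qOf e))) g /\
  g e = Some (top (qOf e)) /\ (forall s y, g s = Some y -> le s e).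
Proof.
  destruct (qOf_iso e) as [f Hf].
  exists (fun s => match restr (fun s => le s e) s with Some b => Some (f b) | None => None end).
  split; [|split].
  - apply ismap_comp with (le2 := sub_le le (fun s => le s e)) (lab2 := sub_lab lab (fun s => le s e)).
    + apply restr_map. apply (rdown Hr).
    + apply Hf.
  - assert (H := restr_in (fun s => le s e) (topd e)). simpl in H. rewrite H.
    f_equal. apply iso_top_q; auto.
  - intros s y. destruct (restr (fun s => le s e) s) as [b|] eqn:Hb; [|discriminate].
    apply restr_some in Hb. subst s. intros _. apply (proj2_sig b).
Qed.

Lemma Psi_qOf e : Psi R le lab (qOf e).
Proof. destruct (qOf_map e) as [g [Hg _]]. exists g; auto. Qed.

Lemma T_lemma q g (Hg : is_map A le lab (rle (R q)) (rlab (R q)) g) e (He : g e = Some (top q)) :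
  q = qOf e.
Proof.
  set (C := fun s => le s e).
  assert (Hg' : is_map A (sub_le le C) (sub_lab lab C) (rle (R q)) (rlab (R q)) (fun b => g (proj1_sig b))).
  { apply map_restrict_dom; auto. apply (rdown Hr).
    intros y. destruct (mdown Hg C (rdown Hr e) (top q) y) as [s [Hs Hsy]].
    - exists e; split; auto. apply (rrefl Hr).
    - apply Htop.
    - exists s; auto. }
  destruct (K2 A _ _ _ _ (down_real e) (rreal (R q)) (down_extremal A le lab Hr Hx e)
              (topd e) (topd_top e) _ Hg' (top q) He) as [f' [_ Hf']].
  apply Hdistinct. eapply riso_trans; [apply riso_sym; exists f'; exact Hf'|]. apply qOf_iso.
Qed.

Lemma Psi_char q : Psi R le lab q <-> exists e, q = qOf e.
Proof.
  split.
  - intros [g Hg]. destruct (msurj Hg (top q)) as [e He]. exists e. eapply T_lemma; eauto.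
  - intros [e ->]. apply Psi_qOf.
Qed.

Lemma qOf_down e c : leP R c (qOf e) -> exists e', le e' e /\ c = qOf e'.
Proof.
  intros [h Hh]. destruct (qOf_map e) as [g [Hg [_ Hdom]]].
  assert (Hc := ismap_comp _ _ _ _ _ _ _ _ _ Hg Hh).
  destruct (msurj Hc (top c)) as [e' He'].
  destruct (g e') as [y|] eqn:Hy; [|discriminate].
  exists e'; split; [eapply Hdom; eauto|]. eapply T_lemma; [exact Hc|]. simpl. rewrite Hy. exact He'.
Qed.

End Rho.

Lemma qOf_top b : qOf (rreal (R b)) (Hext b) (top b) = b.
Proof.
  symmetry. eapply (T_lemma (rreal (R b)) (Hext b) b (fun e => Some e)); [apply ismap_id|reflexivity].
Qed.

Lemma Psi_down {E : Type} (le : E -> E -> Prop) (lab : E -> ev A) :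
  down_closed (leP R) (Psi R le lab).
Proof.
  intros p q [f Hf] [g Hg]. exists (fun e => match f e with Some e2 => g e2 | None => None end).
  eapply ismap_comp; eauto.
Qed.

Lemma Psi_config {E : Type} {le : E -> E -> Prop} {lab : E -> ev A}
  (Hr : is_real A le lab) (Hx : extremal A le lab) : configP R top (Psi R le lab).
Proof.
  split; [apply Psi_down|].
  intros X HX HXs. split; auto.
  assert (HY : forall q, downP R X q -> Psi R le lab q).
  { intros q [p [Hp Hqp]]. eapply Psi_down; eauto. }
  split.
  - apply consistent_sub with (image lab (fun _ => True)); [|apply (rall Hr)].
    intros a [q [Hq <-]]. destruct (HY q Hq) as [g Hg].
    destruct (msurj Hg (top q)) as [s Hs]. exists s; split; auto.
    unfold maxA. eapply mlab; eauto.
  - intros a [q [Hq <-]].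
    destruct (rall (rreal (R q))) as [_ Hsec].
    destruct (Hsec (maxA R top q)) as [l [Hl1 Hl2]]; [exists (top q); auto|].
    exists l; split; auto. intros b Hb. destruct (Hl2 b Hb) as [r [_ <-]].
    exists (qOf (rreal (R q)) (Hext q) r). split.
    + destruct Hq as [p [Hp Hqp]]. exists p; split; auto.
      eapply leP_trans; [|exact Hqp]. apply (Psi_qOf (rreal (R q)) (Hext q)).
    + apply qOf_lab.
Qed.

Lemma leP_antisym p q : leP R p q -> leP R q p -> p = q.
Proof.
  intros Hpq Hqp.
  assert (Hpq' := Hpq). destruct Hpq' as [g Hg].
  destruct (msurj Hg (top p)) as [e He].
  assert (Hp := T_lemma (rreal (R q)) (Hext q) p g Hg e He).
  assert (Hqp' := Hqp). destruct Hqp' as [g' Hg'].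
  destruct (msurj Hg' (top q)) as [e' He'].
  assert (Hq := T_lemma (rreal (R p)) (Hext p) q g' Hg' e' He').
  destruct (classic (e = top q)) as [Het|Hne].
  - subst e. rewrite qOf_top in Hp. auto.
  - exfalso.
    assert (I1 := qOf_iso (rreal (R q)) (Hext q) e). rewrite <- Hp in I1.
    assert (I2 := qOf_iso (rreal (R p)) (Hext p) e'). rewrite <- Hq in I2.
    destruct I1 as [f1 F1]. destruct I2 as [f2 F2].
    destruct (iso_inv _ _ _ _ _ _ F1) as [k1 [K1 _]].
    destruct (iso_inv _ _ _ _ _ _ F2) as [k2 [K2' _]].
    destruct (rfin (rreal (R q)) (top q)) as [l Hl].
    apply (pigeon l (fun a => Hl a (Htop q a))
             (fun r => proj1_sig (k1 (proj1_sig (k2 r)))))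
      with (y := top q).
    + intros a b H. apply sig_eq in H. apply (iso_injective _ _ _ _ _ _ K1) in H.
      apply sig_eq in H. apply (iso_injective _ _ _ _ _ _ K2') in H. auto.
    + intros a H. apply Hne. apply (rantisym (rreal (R q))); [apply Htop|].
      rewrite <- H. apply (proj2_sig (k1 (proj1_sig (k2 a)))).
Qed.


Lemma list_lift (Y : I -> Prop) (F : ev A -> Prop) (lF : list (ev A)) :
  (forall a, In a lF -> F a -> exists p, Y p /\ maxA R top p = a) ->
  exists lp : list I, (forall p, In p lp -> Y p) /\
    (forall a, In a lF -> F a -> exists p, In p lp /\ maxA R top p = a).
Proof.
  induction lF as [|a lF IH]; intros H.
  - exists []; split; simpl; tauto.
  - destruct IH as [lp [H1 H2]]. { intros b Hb; apply H; simpl; auto. }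
    destruct (classic (F a)) as [Fa|nFa].
    + destruct (H a) as [p [Hp Hpa]]; [simpl; auto|auto|].
      exists (p :: lp); split.
      * intros q [<-|Hq]; auto.
      * intros b [<-|Hb] Fb; [exists p; simpl; auto|]. destruct (H2 b Hb Fb) as [q [Hq1 Hq2]].
        exists q; simpl; auto.
    + exists lp; split; auto. intros b [<-|Hb] Fb; [contradiction|].
      destruct (H2 b Hb Fb) as [q [Hq1 Hq2]]. exists q; simpl; auto.
Qed.

Lemma Phi_real (x : I -> Prop) (Hx : configP R top x) : is_real A (PhiLe R x) (PhiLab R top x).
Proof.
  destruct Hx as [Hxd HxC].
  split; [|split; [|split; [|split]]].
  - intros a; apply leP_refl.
  - intros a b H1 H2. apply sig_eq. apply leP_antisym; auto.
  - intros a b c; apply leP_trans.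
  - intros a.
    set (ra := rreal (R (proj1_sig a))). set (xa := Hext (proj1_sig a)).
    assert (Hq : forall r, x (qOf ra xa r)).
    { intros r. apply (Hxd (proj1_sig a)); [apply proj2_sig|]. apply (Psi_qOf ra xa r). }
    destruct (rfin ra (top (proj1_sig a))) as [l Hl].
    exists (map (fun r => exist x (qOf ra xa r) (Hq r)) l).
    intros b Hb. apply (Psi_char ra xa) in Hb. destruct Hb as [r Hr].
    apply in_map_iff. exists r; split; [apply sig_eq; simpl; auto|]. apply Hl, Htop.
  - intros y Hy.
    set (Y := fun p => exists h, y (exist x p h)).
    assert (HYd : down_closed (leP R) Y).
    { intros p q [h Hp] Hqp. assert (hq : x q) by (eapply Hxd; eauto).
      exists hq. apply (Hy _ _ Hp). exact Hqp. }
    apply config_ext with (image (maxA R top) Y).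
    { intros a; split.
      - intros [p [[h Hp] <-]]. exists (exist x p h); auto.
      - intros [[p h] [Hp <-]]. exists p; split; auto. exists h; auto. }
    split.
    + intros F [lF HlF] HFY.
      destruct (list_lift Y F lF) as [lp [Hlp1 Hlp2]].
      { intros a _ Ha. apply HFY in Ha. destruct Ha as [p [Hp Hpa]]. exists p; auto. }
      destruct (HxC (fun p => In p lp)) as [_ [Hcons _]].
      { exists lp; auto. }
      { intros p Hp. destruct (Hlp1 p Hp) as [h _]; auto. }
      apply Hcons; [exists lF; auto|].
      intros a Fa. destruct (Hlp2 a (HlF a Fa) Fa) as [p [Hp Hpa]].
      exists p; split; auto. exists p; split; auto. apply leP_refl.
    + intros a [p [Hp <-]].
      destruct (HxC (fun q => q = p)) as [_ [_ Hsec]].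
      { exists [p]; intros q ->; simpl; auto. }
      { intros q ->. destruct Hp as [h _]; auto. }
      destruct (Hsec (maxA R top p)) as [l [Hl1 Hl2]].
      { exists p; split; auto. exists p; split; auto. apply leP_refl. }
      exists l; split; auto. intros b Hb. destruct (Hl2 b Hb) as [q [[q' [-> Hqp]] <-]].
      exists q; split; auto. eapply HYd; eauto.
Qed.


Lemma M_lemma (x : I -> Prop) (Hx : configP R top x) {E' : Type} (le' : E' -> E' -> Prop)
  (lab' : E' -> ev A) (Hr' : is_real A le' lab') (g : sig x -> E')
  (Hg : is_map A (PhiLe R x) (PhiLab R top x) le' lab' (fun c => Some (g c))) (b : sig x) :
  down_closed le' (fun y => exists c, PhiLe R x c b /\ g c = y) /\
  real_iso A (rle (R (proj1_sig b))) (rlab (R (proj1_sig b)))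
    (sub_le le' (fun y => exists c, PhiLe R x c b /\ g c = y))
    (sub_lab lab' (fun y => exists c, PhiLe R x c b /\ g c = y)) /\
  (forall c, PhiLe R x c b -> le' (g c) (g b)) /\
  (forall y, (exists c, PhiLe R x c b /\ g c = y) <-> le' y (g b)).
Proof.
  set (G := fun y => exists c, PhiLe R x c b /\ g c = y).
  assert (HGd : down_closed le' G).
  { intros y y' Hy Hle.
    destruct (mdown Hg (fun c => PhiLe R x c b)) with y y' as [c [Hc Hcy]]; auto.
    - intros c1 c2 H1 H2. eapply leP_trans; eauto.
    - destruct Hy as [c [Hc <-]]. exists c; auto.
    - injection Hcy; intros <-. exists c; auto. }
  destruct Hx as [Hxd HxC].
  set (bb := proj1_sig b). set (rb := rreal (R bb)). set (xb := Hext bb).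
  assert (Hq : forall r, x (qOf rb xb r)).
  { intros r. apply (Hxd bb); [apply proj2_sig|]. apply (Psi_qOf rb xb r). }
  set (cr := fun r => exist x (qOf rb xb r) (Hq r)).
  assert (Hcr : forall r, PhiLe R x (cr r) b) by (intros r; apply (Psi_qOf rb xb r)).
  assert (HG : forall r, G (g (cr r))) by (intros r; exists (cr r); auto).
  set (m := fun r => exist G (g (cr r)) (HG r)).
  assert (Hm : is_map A (rle (R bb)) (rlab (R bb)) (sub_le le' G) (sub_lab lab' G) (fun r => Some (m r))).
  { split; [|split].
    - intros [y [c [Hc Hcy]]]. destruct (proj1 (Psi_char rb xb (proj1_sig c)) Hc) as [r Hr].
      exists r. f_equal. apply sig_eq; simpl. rewrite <- Hcy. f_equal. apply sig_eq; simpl; auto.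
    - intros D HD z z' [r [Hr Hrz]] Hle. injection Hrz; clear Hrz; intros Hrz.
      set (QD := fun c : sig x => exists r, D r /\ cr r = c).
      assert (HQD : down_closed (PhiLe R x) QD).
      { intros c c' [r1 [Hr1 <-]] Hc'.
        destruct (qOf_down rb xb r1 (proj1_sig c') Hc') as [r2 [Hr2 Hc2]].
        exists r2; split; [eapply HD; eauto|]. apply sig_eq; simpl; auto. }
      destruct (mdown Hg QD HQD (proj1_sig z) (proj1_sig z')) as [c' [[r' [Hr2' <-]] Hc']].
      + exists (cr r); split; [exists r; auto|]. rewrite <- Hrz; auto.
      + exact Hle.
      + exists r'; split; auto. f_equal. apply sig_eq; simpl. injection Hc'; auto.
    - intros r z H. injection H; clear H; intros <-. unfold sub_lab; simpl.
      rewrite <- (mlab Hg (cr r) _ eq_refl). unfold PhiLab; simpl. symmetry. apply qOf_lab. }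
  assert (HGr : is_real A (sub_le le' G) (sub_lab lab' G)) by (apply sub_real; auto).
  assert (Hiso := Hext bb _ _ _ HGr m Hm).
  assert (Hcrt : cr (top bb) = b).
  { apply sig_eq; simpl. apply qOf_top. }
  assert (Hmono : forall c, PhiLe R x c b -> le' (g c) (g b)).
  { intros c Hc. assert (H := iso_top _ _ _ _ _ _ HGr Hiso (top bb) (Htop bb)
                          (exist G (g c) (ex_intro _ c (conj Hc eq_refl)))).
    unfold sub_le in H; simpl in H. rewrite Hcrt in H. exact H. }
  split; [exact HGd|]. split; [exists m; exact Hiso|]. split; [exact Hmono|].
  intros y; split.
  - intros [c [Hc <-]]. auto.
  - intros Hy. eapply HGd; [|exact Hy]. exists b; split; auto. apply leP_refl.
Qed.

Lemma Phi_extremal (x : I -> Prop) (Hx : configP R top x) : extremal A (PhiLe R x) (PhiLab R top x).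
Proof.
  intros E' le' lab' Hr' g Hg.
  assert (Hinj : forall b1 b2, g b1 = g b2 -> b1 = b2).
  { intros b1 b2 H. apply sig_eq. apply Hdistinct.
    destruct (M_lemma x Hx le' lab' Hr' g Hg b1) as [_ [I1 [_ E1]]].
    destruct (M_lemma x Hx le' lab' Hr' g Hg b2) as [_ [I2 [_ E2]]].
    eapply riso_trans; [exact I1|]. eapply riso_trans; [apply sub_equiv_iso; exact E1|].
    rewrite H. eapply riso_trans; [apply riso_sym, sub_equiv_iso; exact E2|]. apply riso_sym; exact I2. }
  assert (Hs : forall y, exists b, g b = y).
  { intros y. destruct (msurj Hg y) as [b Hb]. injection Hb; eauto. }
  set (ginv := fun y => proj1_sig (constructive_indefinite_description _ (Hs y))).
  assert (G1 : forall y, g (ginv y) = y).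
  { intros y. unfold ginv. destruct (constructive_indefinite_description _ (Hs y)); auto. }
  assert (G2 : forall b, ginv (g b) = b) by (intros b; apply Hinj; apply G1).
  split; auto. exists ginv. split; [|split]; auto.
  split; [|split].
  - intros b. exists (g b). rewrite G2; auto.
  - intros T HT b b' [y [Hy Hyb]] Hle. injection Hyb; clear Hyb; intros <-.
    exists (g b'); split; [|rewrite G2; auto].
    eapply HT; [exact Hy|]. rewrite <- (G1 y).
    destruct (M_lemma x Hx le' lab' Hr' g Hg (ginv y)) as [_ [_ [Hmono _]]]. auto.
  - intros y b H. injection H; clear H; intros <-.
    rewrite (mlab Hg (ginv y) _ eq_refl), G1; auto.
Qed.

Lemma Psi_Phi (x : I -> Prop) (Hx : configP R top x) p :
  Psi R (PhiLe R x) (PhiLab R top x) p <-> x p.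
Proof.
  assert (Hr := Phi_real x Hx).
  split.
  - intros [f Hf]. destruct (msurj Hf (top p)) as [b Hb].
    destruct (M_lemma x Hx _ _ Hr (fun c => c) (ismap_id _ _ _) b) as [HGd [[m Hm] _]].
    set (G := fun y => exists c, PhiLe R x c b /\ c = y) in *.
    assert (Hf' : is_map A (sub_le (PhiLe R x) G) (sub_lab (PhiLab R top x) G) (rle (R p)) (rlab (R p))
                   (fun c => f (proj1_sig c))).
    { apply map_restrict_dom; auto. intros y.
      destruct (mdown Hf G HGd (top p) y) as [c [Hc Hcy]]; [|apply Htop|exists c; auto].
      exists b; split; auto. exists b; split; auto. apply leP_refl. }
    destruct Hx as [Hxd _]. apply (Hxd (proj1_sig b)); [apply proj2_sig|].
    exists (fun r => match Some (m r) with Some e2 => f (proj1_sig e2) | None => None end).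
    exact (ismap_comp _ _ _ _ _ _ _ _ _ (proj1 Hm) Hf').
  - intros Hp. set (b := exist x p Hp).
    destruct (M_lemma x Hx _ _ Hr (fun c => c) (ismap_id _ _ _) b) as [HGd [Hiso _]].
    apply riso_sym in Hiso. destruct Hiso as [k [Hk _]].
    exists (fun c => match restr _ c with Some e2 => Some (k e2) | None => None end).
    exact (ismap_comp _ _ _ _ _ _ _ _ _ (restr_map _ _ _ _ HGd) Hk).
Qed.

Definition hOf {E : Type} {le : E -> E -> Prop} {lab : E -> ev A}
  (Hr : is_real A le lab) (Hx : extremal A le lab) (e : E) : sig (Psi R le lab) :=
  exist _ (qOf Hr Hx e) (Psi_qOf Hr Hx e).

Lemma hOf_map {E : Type} {le : E -> E -> Prop} {lab : E -> ev A}
  (Hr : is_real A le lab) (Hx : extremal A le lab) :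
  is_map A le lab (PhiLe R (Psi R le lab)) (PhiLab R top (Psi R le lab)) (fun e => Some (hOf Hr Hx e)).
Proof.
  split; [|split].
  - intros [q Hq]. apply (Psi_char Hr Hx) in Hq as Hq'. destruct Hq' as [e He].
    exists e. f_equal. apply sig_eq; simpl; auto.
  - intros D HD c c' [e [He Hec]] Hle. injection Hec; clear Hec; intros <-.
    destruct (qOf_down Hr Hx e (proj1_sig c') Hle) as [e' [He' Hc']].
    exists e'; split; [eapply HD; eauto|]. f_equal; apply sig_eq; simpl; auto.
  - intros e c H. injection H; clear H; intros <-. unfold PhiLab; simpl. symmetry; apply qOf_lab.
Qed.

Lemma hOf_iso {E : Type} {le : E -> E -> Prop} {lab : E -> ev A}
  (Hr : is_real A le lab) (Hx : extremal A le lab) :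
  iso_map A le lab (PhiLe R (Psi R le lab)) (PhiLab R top (Psi R le lab)) (hOf Hr Hx).
Proof.
  apply Hx; [apply Phi_real, Psi_config; auto|]. apply hOf_map.
Qed.


Lemma order_back {E E' : Type} {le : E -> E -> Prop} {lab : E -> ev A}
  {le' : E' -> E' -> Prop} {lab' : E' -> ev A}
  (Hr : is_real A le lab) (Hx : extremal A le lab)
  (Hr' : is_real A le' lab') (Hx' : extremal A le' lab') :
  subset (Psi R le lab) (Psi R le' lab') -> real_preceq A le lab le' lab'.
Proof.
  intros Hsub.
  set (P := Psi R le lab). set (P' := Psi R le' lab').
  set (j := fun c : sig P' => match excluded_middle_informative (P (proj1_sig c)) with
                              | left h => Some (exist P (proj1_sig c) h) | right _ => None end).
  assert (Hj : is_map A (PhiLe R P') (PhiLab R top P') (PhiLe R P) (PhiLab R top P) j).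
  { split; [|split].
    - intros c. exists (exist P' (proj1_sig c) (Hsub _ (proj2_sig c))). unfold j; simpl.
      destruct (excluded_middle_informative (P (proj1_sig c))) as [h|n].
      + f_equal; apply sig_eq; auto.
      + destruct c; contradiction.
    - intros D HD c c' [d [Hd Hdc]] Hle. unfold j in Hdc.
      destruct (excluded_middle_informative (P (proj1_sig d))) as [h|n]; [|discriminate].
      injection Hdc; clear Hdc; intros <-.
      exists (exist P' (proj1_sig c') (Hsub _ (proj2_sig c'))). split.
      + eapply HD; [exact Hd|]. exact Hle.
      + unfold j; simpl. destruct (excluded_middle_informative (P (proj1_sig c'))) as [h'|n'].
        * f_equal; apply sig_eq; auto.
        * destruct c'; contradiction.
    - intros c d H. unfold j in H.
      destruct (excluded_middle_informative (P (proj1_sig c))) as [h|n]; [|discriminate].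
      injection H; intros <-. reflexivity. }
  destruct (iso_inv _ _ _ _ _ _ (hOf_iso Hr Hx)) as [k [[Hk _] _]].
  assert (H1 := hOf_map Hr' Hx').
  assert (H2 := ismap_comp _ _ _ _ _ _ _ _ _ H1 Hj).
  assert (H3 := ismap_comp _ _ _ _ _ _ _ _ _ H2 Hk).
  eexists; exact H3.
Qed.

Lemma main_aux :
  (forall (E : Type) (le : E -> E -> Prop) (lab : E -> ev A),
      is_real A le lab -> extremal A le lab ->
      configP R top (Psi R le lab)) /\
  (forall x : I -> Prop, configP R top x ->
      is_real A (PhiLe R x) (PhiLab R top x) /\
      extremal A (PhiLe R x) (PhiLab R top x) /\
      (forall p, Psi R (PhiLe R x) (PhiLab R top x) p <-> x p)) /\
  (forall (E : Type) (le : E -> E -> Prop) (lab : E -> ev A),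
      is_real A le lab -> extremal A le lab ->
      real_iso A (PhiLe R (Psi R le lab)) (PhiLab R top (Psi R le lab)) le lab) /\
  (forall (E : Type) (le : E -> E -> Prop) (lab : E -> ev A)
          (E' : Type) (le' : E' -> E' -> Prop) (lab' : E' -> ev A),
      is_real A le lab -> extremal A le lab ->
      is_real A le' lab' -> extremal A le' lab' ->
      (real_preceq A le lab le' lab' <-> subset (Psi R le lab) (Psi R le' lab'))).
Proof.
  split; [|split; [|split]].
  - intros E le lab Hr Hx. apply Psi_config; auto.
  - intros x Hx. split; [apply Phi_real; auto|split; [apply Phi_extremal; auto|apply Psi_Phi; auto]].
  - intros E le lab Hr Hx. apply riso_sym. exists (hOf Hr Hx). apply hOf_iso.
  - intros E le lab E' le' lab' Hr Hx Hr' Hx'. split.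
    + intros [f Hf] p [g Hg].
      exists (fun e => match f e with Some e2 => g e2 | None => None end).
      exact (ismap_comp _ _ _ _ _ _ _ _ _ Hf Hg).
    + apply order_back; auto.
Qed.

End Main.

Theorem mainTheorem1 (A : GES) (I : Type) (R : I -> realisation A)
  (top : forall i, carrier (R i))
  (* R is a system of representatives of the isomorphism classes of extremal
     realisations of C^infty(A) having a top element *)
  (Htop : forall i e, rle (R i) e (top i))
  (Hext : forall i, extremal A (rle (R i)) (rlab (R i)))
  (Hdistinct : forall i j, real_iso A (rle (R i)) (rlab (R i)) (rle (R j)) (rlab (R j)) -> i = j)
  (Hcover : forall (E : Type) (le : E -> E -> Prop) (lab : E -> ev A),
      is_real A le lab -> extremal A le lab -> has_top le ->
      exists i, real_iso A le lab (rle (R i)) (rlab (R i))) :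
  (* extremal realisation rho |-> configuration {p | p <= rho} *)
  (forall (E : Type) (le : E -> E -> Prop) (lab : E -> ev A),
      is_real A le lab -> extremal A le lab ->
      configP R top (Psi R le lab)) /\
  (* configuration x |-> extremal realisation (x, <=_P|x, max_A), and back *)
  (forall x : I -> Prop, configP R top x ->
      is_real A (PhiLe R x) (PhiLab R top x) /\
      extremal A (PhiLe R x) (PhiLab R top x) /\
      (forall p, Psi R (PhiLe R x) (PhiLab R top x) p <-> x p)) /\
  (forall (E : Type) (le : E -> E -> Prop) (lab : E -> ev A),
      is_real A le lab -> extremal A le lab ->
      real_iso A (PhiLe R (Psi R le lab)) (PhiLab R top (Psi R le lab)) le lab) /\
  (* order isomorphism *)
  (forall (E : Type) (le : E -> E -> Prop) (lab : E -> ev A)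
          (E' : Type) (le' : E' -> E' -> Prop) (lab' : E' -> ev A),
      is_real A le lab -> extremal A le lab ->
      is_real A le' lab' -> extremal A le' lab' ->
      (real_preceq A le lab le' lab' <-> subset (Psi R le lab) (Psi R le' lab'))).
Proof.
  exact (main_aux A I R top Htop Hext Hdistinct Hcover).
Qed.
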